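(* In the setting described in the context (with $L=[0,1]$), let $q\in\{1,\dots,n\}$ and assume there exists $A\subseteq\mathcal C$ with $|A|=n-q$ and $\nu_q(A)=0$. Define $\mu_*:2^{\mathcal C}\to[0,1]$ by $\mu_*(\mathcal C)=1$, $\mu_*(X)=\nu_q(X)$ if $n-q\le|X|<n$, and $\mu_*(X)=\min_{Y\supsetneq X,\ n-q\le|Y|<n}\nu_q(Y)$ if $|X|<n-q$. Then $\mu_*$ is a $q$-minitive capacity and $\max_{1\le k\le N}|S_{\mu_*}(x^{(k)})-\alpha^{(k)}|=\nabla_q$.
   Context: Let $\mathcal C=\{1,\dots,n\}$ and $L=[0,1]$. A capacity is a map $\mu:2^{\mathcal C}\to[0,1]$ with $\mu(\emptyset)=0$, $\mu(\mathcal C)=1$, monotone for inclusion; it is $q$-minitive if for all $X$ with $|X|<n-q$, $\mu(X)=\min_{Y\supsetneq X,\ |Y|\ge n-q}\mu(Y)$. Sugeno integral: $S_\mu(x)=\max_{A\subseteq\mathcal C}\min(\min_{i\in A}x_i,\mu(A))$ with $\min_{i\in\emptyset}x_i=1$. Training data: $N$ pairs $(x^{(k)},\alpha^{(k)})$, $x^{(k)}\in[0,1]^n$, $\alpha^{(k)}\in[0,1]$. For $A\subsetneq\mathcal C$, $\gamma_{k,A}=\max_{i\in\mathcal C\setminus A}x^{(k)}_i$. Write $t^+=\max(t,0)$. For $1\le i\le N$ and $A\subsetneq\mathcal C$ with $|A|\ge n-q$, let $\sigma_\epsilon(\alpha^{(i)},\gamma_{l,A},\alpha^{(l)})=\min\big(\tfrac{(\alpha^{(l)}-\alpha^{(i)})^+}{2},(\alpha^{(l)}-\gamma_{l,A})^+\big)$,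 $\nabla_{i,A}=\max\big((\gamma_{i,A}-\alpha^{(i)})^+,\max_{1\le l\le N}\sigma_\epsilon(\alpha^{(i)},\gamma_{l,A},\alpha^{(l)})\big)$, $\nabla_i=\min_{A\subsetneq\mathcal C,\ |A|\ge n-q}\nabla_{i,A}$, and $\nabla_q=\max_{1\le i\le N}\nabla_i$. For $A\subsetneq\mathcal C$ with $|A|\ge n-q$, $\nu_q(A)=\max_{1\le k\le N}\big(\gamma_{k,A}\,\epsilon\,\max(\alpha^{(k)}-\nabla_q,0)\big)$, where $a\,\epsilon\,b=b$ if $a<b$ and $a\,\epsilon\,b=0$ if $a\ge b$. *)

(* Defs.v *)
From HB Require Import structures.
From mathcomp Require Import all_boot all_order all_algebra.
Set Implicit Arguments. Unset Strict Implicit. Unset Printing Implicit Defensive.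
Import Order.TTheory GRing.Theory Num.Theory.
Local Open Scope ring_scope.

Section Defs.
Variable R : realFieldType.
Variables n N q : nat.
(* training data: x k i = x^{(k)}_i, alpha k = alpha^{(k)} *)
Variable x : 'I_N -> 'I_n -> R.
Variable alpha : 'I_N -> R.

Definition posp (t : R) : R := Num.max t 0.

Definition is_capacity (mu : {set 'I_n} -> R) : Prop :=
  mu set0 = 0 /\ mu setT = 1 /\ (forall X, 0 <= mu X <= 1) /\
  (forall X Y : {set 'I_n}, X \subset Y -> mu X <= mu Y).

(* q-minitivity; the min over the (nonempty, since it contains C) family uses
   identity 1, harmless since values are <= 1 and C belongs to the family *)
Definition q_minitive (mu : {set 'I_n} -> R) : Prop :=
  forall X : {set 'I_n}, (#|X| < n - q)%N ->
    mu X = \big[Num.min/1]_(Y : {set 'I_n} | (X \proper Y) && (n - q <= #|Y|)%N) mu Y.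

(* Sugeno integral, min over the empty set = 1 *)
Definition sugeno (mu : {set 'I_n} -> R) (y : 'I_n -> R) : R :=
  \big[Num.max/0]_(A : {set 'I_n}) Num.min (\big[Num.min/1]_(i in A) y i) (mu A).

Definition gamma (k : 'I_N) (A : {set 'I_n}) : R :=
  \big[Num.max/0]_(i in ~: A) x k i.

Definition sigma_eps (ai g al : R) : R :=
  Num.min (posp (al - ai) / 2) (posp (al - g)).

Definition nablaA (i : 'I_N) (A : {set 'I_n}) : R :=
  Num.max (posp (gamma i A - alpha i))
          (\big[Num.max/0]_(l : 'I_N) sigma_eps (alpha i) (gamma l A) (alpha l)).

Definition nabla_i (i : 'I_N) : R :=
  \big[Num.min/1]_(A : {set 'I_n} | (A != setT) && (n - q <= #|A|)%N) nablaA i A.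

Definition nabla_q : R := \big[Num.max/0]_(i : 'I_N) nabla_i i.

Definition eps_op (a b : R) : R := if a < b then b else 0.

Definition nu_q (A : {set 'I_n}) : R :=
  \big[Num.max/0]_(k : 'I_N) eps_op (gamma k A) (Num.max (alpha k - nabla_q) 0).

Definition mu_star (X : {set 'I_n}) : R :=
  if X == setT then 1
  else if (n - q <= #|X|)%N then nu_q X
  else \big[Num.min/1]_(Y : {set 'I_n} |
          [&& X \proper Y, (n - q <= #|Y|)%N & Y != setT]) nu_q Y.

End Defs.

(* Main.v *)
Require Import Defs.
From HB Require Import structures.
From mathcomp Require Import all_boot all_order all_algebra.
From mathcomp Require Import lra zify.
Import Order.TTheory GRing.Theory Num.Theory.
Local Open Scope ring_scope.
Set Implicit Arguments. Unset Strict Implicit.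

Lemma bmax_le (R : realFieldType) (I : finType) (P : pred I) (F : I -> R) x0 t :
  x0 <= t -> (forall i, P i -> F i <= t) -> \big[Num.max/x0]_(i | P i) F i <= t.
Proof.
move=> h0 hF; apply: (big_ind (fun v => v <= t)) => // a b ha hb.
by rewrite ge_max ha hb.
Qed.

Lemma bmax_lt (R : realFieldType) (I : finType) (P : pred I) (F : I -> R) x0 t :
  x0 < t -> (forall i, P i -> F i < t) -> \big[Num.max/x0]_(i | P i) F i < t.
Proof.
move=> h0 hF; apply: (big_ind (fun v => v < t)) => // a b ha hb.
by rewrite gt_max ha hb.
Qed.

Lemma bmin_ge (R : realFieldType) (I : finType) (P : pred I) (F : I -> R) x0 t :
  t <= x0 -> (forall i, P i -> t <= F i) -> t <= \big[Num.min/x0]_(i | P i) F i.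
Proof.
move=> h0 hF; apply: (big_ind (fun v => t <= v)) => // a b ha hb.
by rewrite le_min ha hb.
Qed.

Lemma bmin_gt (R : realFieldType) (I : finType) (P : pred I) (F : I -> R) x0 t :
  t < x0 -> (forall i, P i -> t < F i) -> t < \big[Num.min/x0]_(i | P i) F i.
Proof.
move=> h0 hF; apply: (big_ind (fun v => t < v)) => // a b ha hb.
by rewrite lt_min ha hb.
Qed.

Lemma bmax_ge (R : realFieldType) (I : finType) (P : pred I) (F : I -> R) x0 j :
  P j -> F j <= \big[Num.max/x0]_(i | P i) F i.
Proof.
move=> Pj.
have : j \in [seq i <- index_enum I | P i] by rewrite mem_filter Pj mem_index_enum.
rewrite -big_filter; elim: [seq i <- index_enum I | P i] => //= a s IH.
rewrite inE big_cons => /orP[/eqP->|/IH h]; rewrite le_max ?lexx //.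
by rewrite h orbT.
Qed.

Lemma bmin_le (R : realFieldType) (I : finType) (P : pred I) (F : I -> R) x0 j :
  P j -> \big[Num.min/x0]_(i | P i) F i <= F j.
Proof.
move=> Pj.
have : j \in [seq i <- index_enum I | P i] by rewrite mem_filter Pj mem_index_enum.
rewrite -big_filter; elim: [seq i <- index_enum I | P i] => //= a s IH.
rewrite inE big_cons => /orP[/eqP->|/IH h]; rewrite ge_min ?lexx //.
by rewrite h orbT.
Qed.

Lemma bmax_lb0 (R : realFieldType) (I : finType) (P : pred I) (F : I -> R) x0 :
  x0 <= \big[Num.max/x0]_(i | P i) F i.
Proof. by elim/big_rec: _ => // i v _ h; rewrite le_max h orbT. Qed.

Lemma bmin_ub (R : realFieldType) (I : finType) (P : pred I) (F : I -> R) x0 :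
  \big[Num.min/x0]_(i | P i) F i <= x0.
Proof. by elim/big_rec: _ => // i v _ h; rewrite ge_min h orbT. Qed.

Lemma bmax_ex (R : realFieldType) (I : finType) (P : pred I) (F : I -> R) x0 t :
  x0 < t -> t <= \big[Num.max/x0]_(i | P i) F i -> exists i, P i /\ t <= F i.
Proof.
move=> h0 h.
case: (boolP [exists i, P i && (t <= F i)]) => [/existsP[i /andP[]]|/existsPn H].
  by move=> a b; exists i.
have : \big[Num.max/x0]_(i | P i) F i < t.
  apply: bmax_lt => // i Pi; move: (H i); rewrite Pi /= ltNge => ->. done.
by rewrite ltNge h.
Qed.

Lemma bmin_ex (R : realFieldType) (I : finType) (P : pred I) (F : I -> R) x0 t :
  t < x0 -> \big[Num.min/x0]_(i | P i) F i <= t -> exists i, P i /\ F i <= t.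
Proof.
move=> h0 h.
case: (boolP [exists i, P i && (F i <= t)]) => [/existsP[i /andP[]]|/existsPn H].
  by move=> a b; exists i.
have : t < \big[Num.min/x0]_(i | P i) F i.
  apply: bmin_gt => // i Pi; move: (H i); rewrite Pi /= ltNge => ->. done.
by rewrite ltNge h.
Qed.

Lemma sug_ge (R : realFieldType) n (mu : {set 'I_n} -> R) (y : 'I_n -> R) (A : {set 'I_n}) :
  Num.min (\big[Num.min/1]_(i in A) y i) (mu A) <= sugeno mu y.
Proof. exact: (bmax_ge (P := predT)). Qed.

Lemma sug_le (R : realFieldType) n (mu : {set 'I_n} -> R) (y : 'I_n -> R) (B : {set 'I_n}) :
  (forall X Y : {set 'I_n}, X \subset Y -> mu X <= mu Y) -> 0 <= mu B ->
  sugeno mu y <= Num.max (\big[Num.max/0]_(i in ~: B) y i) (mu B).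
Proof.
move=> mono h0; apply: bmax_le => [|A _]; first by rewrite le_max h0 orbT.
case: (boolP (A \subset B)) => [sAB|/subsetPn[j jA jB]].
  by rewrite ge_min; apply/orP; right; apply: le_trans (mono _ _ sAB) _; rewrite le_max lexx orbT.
rewrite ge_min; apply/orP; left; apply: le_trans (bmin_le _ _ jA) _.
by rewrite le_max (bmax_ge (P := fun i => i \in ~: B)) // inE.
Qed.

Lemma gam_ge0 (R : realFieldType) (n N : nat) (x : 'I_N -> 'I_n -> R) k A :
  0 <= gamma x k A.
Proof. exact: bmax_lb0. Qed.

Lemma gam_le1 (R : realFieldType) (n N : nat) (x : 'I_N -> 'I_n -> R) k A :
  (forall k i, 0 <= x k i <= 1) -> gamma x k A <= 1.
Proof. by move=> hx; apply: bmax_le => // i _; case/andP: (hx k i). Qed.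

Lemma gam_anti (R : realFieldType) (n N : nat) (x : 'I_N -> 'I_n -> R) k
  (A B : {set 'I_n}) : A \subset B -> gamma x k B <= gamma x k A.
Proof.
move=> sAB; apply: bmax_le; first exact: bmax_lb0.
move=> i; rewrite !inE => iB; apply: (bmax_ge (P := fun i => i \in ~: A)).
by rewrite inE; apply: contra iB; apply: (subsetP sAB).
Qed.

Lemma delta_ge0 (R : realFieldType) (n N q : nat) (x : 'I_N -> 'I_n -> R)
  (alpha : 'I_N -> R) : 0 <= nabla_q q x alpha.
Proof. exact: bmax_lb0. Qed.

Lemma nu_ge0 (R : realFieldType) (n N q : nat) (x : 'I_N -> 'I_n -> R)
  (alpha : 'I_N -> R) A : 0 <= nu_q q x alpha A.
Proof. exact: bmax_lb0. Qed.

Lemma nu_le1 (R : realFieldType) (n N q : nat) (x : 'I_N -> 'I_n -> R)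
  (alpha : 'I_N -> R) A : (forall k, 0 <= alpha k <= 1) -> nu_q q x alpha A <= 1.
Proof.
move=> ha; apply: bmax_le => // k _; rewrite /eps_op.
have d0 := delta_ge0 q x alpha; case/andP: (ha k) => a0 a1.
case: ifP => // _; rewrite ge_max ler01 andbT; lra.
Qed.

Lemma nu_ge (R : realFieldType) (n N q : nat) (x : 'I_N -> 'I_n -> R)
  (alpha : 'I_N -> R) k A :
  gamma x k A < alpha k - nabla_q q x alpha -> alpha k - nabla_q q x alpha <= nu_q q x alpha A.
Proof.
move=> h; apply: le_trans (bmax_ge _ _ (isT : predT k)); rewrite /eps_op.
have -> : gamma x k A < Num.max (alpha k - nabla_q q x alpha) 0.
  by rewrite lt_max h.
by rewrite le_max lexx.
Qed.

Lemma nu_le (R : realFieldType) (n N q : nat) (x : 'I_N -> 'I_n -> R)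
  (alpha : 'I_N -> R) A t : 0 <= t ->
  (forall k, gamma x k A < alpha k - nabla_q q x alpha -> alpha k - nabla_q q x alpha <= t) ->
  nu_q q x alpha A <= t.
Proof.
move=> t0 h; apply: bmax_le => // k _; rewrite /eps_op.
case: ifP => // hl.
case: (leP (alpha k - nabla_q q x alpha) 0) => h0.
  by move: hl; rewrite (max_r h0) => _.
by move: hl; rewrite (max_l (ltW h0)) => /h.
Qed.

Lemma nu_mono (R : realFieldType) (n N q : nat) (x : 'I_N -> 'I_n -> R)
  (alpha : 'I_N -> R) (A B : {set 'I_n}) : A \subset B -> nu_q q x alpha A <= nu_q q x alpha B.
Proof.
move=> sAB; apply: nu_le; first exact: nu_ge0.
move=> k h; apply: nu_ge; apply: le_lt_trans h; exact: gam_anti.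
Qed.

Lemma cardT_n n : #|[set: 'I_n]| = n.
Proof. by rewrite cardsT card_ord. Qed.

Lemma mu_F (R : realFieldType) (n N q : nat) (x : 'I_N -> 'I_n -> R)
  (alpha : 'I_N -> R) (X : {set 'I_n}) : X != setT -> (n - q <= #|X|)%N ->
  mu_star q x alpha X = nu_q q x alpha X.
Proof. by move=> h1 h2; rewrite /mu_star (negbTE h1) h2. Qed.

Lemma mu_small (R : realFieldType) (n N q : nat) (x : 'I_N -> 'I_n -> R)
  (alpha : 'I_N -> R) (X : {set 'I_n}) : (#|X| < n - q)%N ->
  mu_star q x alpha X = \big[Num.min/1]_(Y : {set 'I_n} |
          [&& X \proper Y, (n - q <= #|Y|)%N & Y != setT]) nu_q q x alpha Y.
Proof.
move=> h; rewrite /mu_star ifF; last first.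
  by apply/negbTE; apply: contraTneq h => ->; rewrite cardT_n -ltnNge ltnS leq_subr.
by rewrite ifF //; apply/negbTE; rewrite -ltnNge.
Qed.

Lemma mu_ge0 (R : realFieldType) (n N q : nat) (x : 'I_N -> 'I_n -> R)
  (alpha : 'I_N -> R) X : (forall k, 0 <= alpha k <= 1) -> 0 <= mu_star q x alpha X.
Proof.
move=> ha; rewrite /mu_star; case: ifP => _ //; case: ifP => _; first exact: nu_ge0.
by apply: bmin_ge => // Y _; apply: nu_ge0.
Qed.

Lemma mu_le1 (R : realFieldType) (n N q : nat) (x : 'I_N -> 'I_n -> R)
  (alpha : 'I_N -> R) X : (forall k, 0 <= alpha k <= 1) -> mu_star q x alpha X <= 1.
Proof.
move=> ha; rewrite /mu_star; case: ifP => _ //; case: ifP => _; first exact: nu_le1.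
exact: bmin_ub.
Qed.

Lemma mu_mono (R : realFieldType) (n N q : nat) (x : 'I_N -> 'I_n -> R)
  (alpha : 'I_N -> R) : (forall k, 0 <= alpha k <= 1) ->
  forall X Y : {set 'I_n}, X \subset Y -> mu_star q x alpha X <= mu_star q x alpha Y.
Proof.
move=> ha X Y sXY.
case: (eqVneq Y setT) => [->|YT]; first by rewrite {2}/mu_star eqxx mu_le1.
have XT : X != setT by apply: contraNneq YT => XT; rewrite eqEsubset subsetT -XT.
case: (leqP (n - q) #|X|) => hX.
  have hY : (n - q <= #|Y|)%N by apply: leq_trans hX (subset_leq_card sXY).
  by rewrite !mu_F //; apply: nu_mono.
rewrite mu_small //.
case: (leqP (n - q) #|Y|) => hY.
  rewrite mu_F //; apply: bmin_le; rewrite hY YT andbT.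
  rewrite properEneq sXY !andbT; apply: contraTneq hX => ->; by rewrite -leqNgt.
rewrite mu_small //; apply: bmin_ge; first exact: bmin_ub.
move=> Z /and3P[pYZ h1 h2]; apply: bmin_le; rewrite h1 h2 !andbT.
exact: sub_proper_trans sXY pYZ.
Qed.

Lemma mu_set0 (R : realFieldType) (n N q : nat) (x : 'I_N -> 'I_n -> R)
  (alpha : 'I_N -> R) : (1 <= q <= n)%N ->
  (exists A : {set 'I_n}, #|A| = (n - q)%N /\ nu_q q x alpha A = 0) ->
  mu_star q x alpha set0 = 0.
Proof.
move=> /andP[q1 qn] [A [cA nA]].
have AT : A != setT by apply/negP => /eqP AT; move: cA; rewrite AT cardT_n; lia.
case: (posnP (n - q)) => h.
  have A0 : A = set0 by apply/eqP; rewrite -cards_eq0 cA h.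
  rewrite -A0 mu_F // cA //.
rewrite mu_small ?cards0 //; apply/le_anti/andP; split.
  rewrite -nA; apply: bmin_le; rewrite cA leqnn AT !andbT.
  by rewrite proper0 -card_gt0 cA.
by apply: bmin_ge => // Y _; apply: nu_ge0.
Qed.

Lemma mu_minitive (R : realFieldType) (n N q : nat) (x : 'I_N -> 'I_n -> R)
  (alpha : 'I_N -> R) : (forall k, 0 <= alpha k <= 1) ->
  q_minitive q (mu_star q x alpha).
Proof.
move=> ha X hX; rewrite mu_small //; apply/le_anti/andP; split.
  apply: bmin_ge; first exact: bmin_ub.
  move=> Y /andP[pXY hY]; case: (eqVneq Y setT) => [->|YT].
    by rewrite /mu_star eqxx; exact: bmin_ub.
  by rewrite mu_F //; apply: bmin_le; rewrite pXY hY YT.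
apply: bmin_ge; first exact: bmin_ub.
move=> Y /and3P[pXY hY YT]; rewrite -mu_F //; apply: bmin_le; by rewrite pXY hY.
Qed.

Lemma S_ge0 (R : realFieldType) n (mu : {set 'I_n} -> R) (y : 'I_n -> R) :
  0 <= sugeno mu y.
Proof. exact: bmax_lb0. Qed.

Lemma S_le1 (R : realFieldType) n (mu : {set 'I_n} -> R) (y : 'I_n -> R) :
  (forall X, mu X <= 1) -> sugeno mu y <= 1.
Proof.
move=> h; apply: bmax_le => // A _; rewrite ge_min; apply/orP; right; exact: h.
Qed.

Lemma mu_ge_t (R : realFieldType) (n N q : nat) (x : 'I_N -> 'I_n -> R)
  (alpha : 'I_N -> R) k (B : {set 'I_n}) : (forall k, 0 <= alpha k <= 1) ->
  gamma x k B < alpha k - nabla_q q x alpha ->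
  alpha k - nabla_q q x alpha <= mu_star q x alpha B.
Proof.
move=> ha h.
have t1 : alpha k - nabla_q q x alpha <= 1.
  have := delta_ge0 q x alpha; case/andP: (ha k) => _ a1; lra.
case: (eqVneq B setT) => [->|BT]; first by rewrite /mu_star eqxx.
case: (leqP (n - q) #|B|) => hB; first by rewrite mu_F //; apply: nu_ge.
rewrite mu_small //; apply: bmin_ge => // Y /and3P[pBY _ _].
apply: nu_ge; apply: le_lt_trans h; apply: gam_anti; exact: proper_sub.
Qed.

Lemma S_lower (R : realFieldType) (n N q : nat) (x : 'I_N -> 'I_n -> R)
  (alpha : 'I_N -> R) k : (forall k, 0 <= alpha k <= 1) ->
  alpha k - nabla_q q x alpha <= sugeno (mu_star q x alpha) (x k).
Proof.
move=> ha; set t := alpha k - nabla_q q x alpha.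
case: (leP t 0) => t0; first by apply: le_trans t0 (S_ge0 _ _).
have t1 : t <= 1.
  have := delta_ge0 q x alpha; case/andP: (ha k) => _ a1; rewrite /t; lra.
apply: le_trans (sug_ge _ _ [set i | t <= x k i]); rewrite le_min; apply/andP; split.
  by apply: bmin_ge => // i; rewrite inE.
apply: mu_ge_t => //; apply: bmax_lt => // i; rewrite !inE -ltNge //.
Qed.

Lemma posp_pos (R : realFieldType) (d u : R) : 0 < d -> d <= posp u -> d <= u.
Proof. by move=> d0; rewrite /posp le_max => /orP[//|h]; lra. Qed.

Lemma posp_lb (R : realFieldType) (u : R) : u <= posp u.
Proof. by rewrite /posp le_max lexx. Qed.

Lemma S_upper (R : realFieldType) (n N q : nat) (x : 'I_N -> 'I_n -> R)
  (alpha : 'I_N -> R) k : (forall k, 0 <= alpha k <= 1) ->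
  sugeno (mu_star q x alpha) (x k) <= alpha k + nabla_q q x alpha.
Proof.
move=> ha; set d := nabla_q q x alpha.
have d0 : 0 <= d := delta_ge0 q x alpha.
case/andP: (ha k) => a0 a1.
case: (leP 1 d) => d1.
  apply: le_trans (S_le1 (x k) (fun X => mu_le1 q x X ha)) _; lra.
have hk : nabla_i q x alpha k <= d by apply: (bmax_ge (P := predT)).
have [A [/andP[AT hA] hAk]] := bmin_ex d1 hk.
apply: le_trans (sug_le (B := A) (x k) (mu_mono q x ha) (mu_ge0 q x A ha)) _.
rewrite mu_F // ge_max; apply/andP; split.
  move: hAk; rewrite /nablaA ge_max => /andP[h _].
  have := le_trans (posp_lb _) h; rewrite /gamma; lra.
apply: nu_le; first lra.
move=> l hl; move: hAk; rewrite /nablaA ge_max => /andP[_ h].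
have := le_trans (bmax_ge _ _ (isT : predT l)) h.
rewrite /sigma_eps ge_min => /orP[h2|h2].
  have := posp_lb (alpha l - alpha k); rewrite -/d in h2 hl *; lra.
rewrite -/d in h2 hl *; have := posp_lb (alpha l - gamma x l A); lra.
Qed.

Lemma S_attained (R : realFieldType) (n N q : nat) (x : 'I_N -> 'I_n -> R)
  (alpha : 'I_N -> R) k : (1 <= q <= n)%N ->
  (forall k i, 0 <= x k i <= 1) -> (forall k, 0 <= alpha k <= 1) ->
  (exists A : {set 'I_n}, #|A| = (n - q)%N /\ nu_q q x alpha A = 0) ->
  exists A : {set 'I_n}, [/\ A != setT, (n - q <= #|A|)%N,
    gamma x k A <= sugeno (mu_star q x alpha) (x k) &
    nu_q q x alpha A <= sugeno (mu_star q x alpha) (x k)].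
Proof.
move=> /andP[q1 qn] hx ha [A0 [cA0 nA0]].
set t := sugeno (mu_star q x alpha) (x k).
have t0 : 0 <= t := S_ge0 _ _.
case: (leP 1 t) => t1.
  have AT : A0 != setT by apply/negP => /eqP AT; move: cA0; rewrite AT cardT_n; lia.
  exists A0; split => //; first by rewrite cA0.
    exact: le_trans (gam_le1 _ _ hx) t1.
  by rewrite nA0.
set B := [set j | t < x k j].
have gB : gamma x k B <= t.
  by apply: bmax_le => // j; rewrite !inE -leNgt.
have mB : mu_star q x alpha B <= t.
  have := sug_ge (mu_star q x alpha) (x k) B; rewrite -/t ge_min => /orP[h|//].
  have : t < \big[Num.min/1]_(i in B) x k i by apply: bmin_gt => // i; rewrite inE.
  by rewrite ltNge h.
have BT : B != setT.
  by apply/negP => /eqP BT; move: mB; rewrite BT /mu_star eqxx => h; by rewrite ltNge h in t1.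
case: (leqP (n - q) #|B|) => hB.
  by exists B; split => //; rewrite -mu_F.
move: mB; rewrite mu_small // => /(bmin_ex t1)[Y [/and3P[pBY hY YT] nY]].
exists Y; split => //.
apply: le_trans gB; apply: gam_anti; exact: proper_sub.
Qed.

Unset Implicit Arguments. Set Strict Implicit.

Theorem proposition4 (R : realFieldType) (n N q : nat)
  (x : 'I_N -> 'I_n -> R) (alpha : 'I_N -> R) :
  (0 < N)%N -> (1 <= q <= n)%N ->
  (forall k i, 0 <= x k i <= 1) -> (forall k, 0 <= alpha k <= 1) ->
  (exists A : {set 'I_n}, #|A| = (n - q)%N /\ nu_q q x alpha A = 0) ->
  is_capacity (mu_star q x alpha) /\ q_minitive q (mu_star q x alpha) /\
  \big[Num.max/0]_(k : 'I_N) `|sugeno (mu_star q x alpha) (x k) - alpha k|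
    = nabla_q q x alpha.
Proof.
move=> N0 hq hx ha hA.
split.
  split; first exact: mu_set0.
  split; first by rewrite /mu_star eqxx.
  split; first by move=> X; rewrite mu_ge0 ?mu_le1.
  exact: mu_mono.
split; first exact: mu_minitive.
set d := nabla_q q x alpha.
have d0 : 0 <= d := delta_ge0 q x alpha.
apply/le_anti/andP; split.
  apply: bmax_le => // k _; rewrite ler_norml.
  have := S_lower q x k ha; have := S_upper q x k ha; rewrite -/d => h1 h2.
  apply/andP; split; lra.
case: (eqVneq d 0) => [->|dn0]; first exact: bmax_lb0.
have dp : 0 < d by rewrite lt_def dn0 d0.
rewrite leNgt; apply/negP => hlt.
have hk : forall k, `|sugeno (mu_star q x alpha) (x k) - alpha k| < d.
  move=> k; apply: le_lt_trans hlt; exact: (bmax_ge (P := predT)).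
have [i [_ hi]] := bmax_ex dp (lexx d).
have [A [AT hAc gA nA]] := @S_attained _ _ _ q x alpha i hq hx ha hA.
have hiA : nabla_i q x alpha i <= nablaA x alpha i A.
  by apply: bmin_le; rewrite AT hAc.
have hd := le_trans hi hiA.
have := hk i; rewrite ltr_norml => /andP[hi1 hi2].
move: hd; rewrite /nablaA le_max => /orP[h|h].
  have := posp_pos dp h; lra.
have [l [_ hl]] := bmax_ex dp h.
move: hl; rewrite /sigma_eps le_min => /andP[h1 h2].
have h1' : d *+ 2 <= posp (alpha l - alpha i) by rewrite mulr2n; lra.
have d2 : 0 < d *+ 2 by rewrite mulr2n; lra.
have e1 := posp_pos d2 h1'.
have e2 := posp_pos dp h2.
have := hk l; rewrite ltr_norml => /andP[hl1 hl2].
have := sug_le (B := A) (x l) (mu_mono q x ha) (mu_ge0 q x A ha).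
rewrite mu_F // le_max => /orP[f|f]; rewrite /gamma in gA e2 f; rewrite mulr2n in e1; lra.
Qed.
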